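(* Let $n \ge 1$. If a partial coloring of an $n\times n$ square $A$ uniquely extends to $L(n,2n-2)$, then $A$ has at most $\frac{8n}{5}$ uncolored entries (hence at most $\lfloor 8n/5\rfloor$ uncolored entries).
   Context: For positive integers $n,k$, let $\mathcal{L}_{n,k}$ be the set of $n\times n$ squares all of whose entries are colored with colors from a fixed set of $k$ colors $\{1,\dots,k\}$ such that any two entries in the same row, or in the same column, have different colors. Entries are indexed $(i,j)$, $i$ the row and $j$ the column, $1\le i,j\le n$. A partial coloring of an $n\times n$ square assigns colors from $\{1,\dots,k\}$ to some of its entries; the remaining entries are called uncolored. A partial coloring extends to $L(n,k)$ if the uncolored entries can be colored so that the resulting fully colored square lies in $\mathcal{L}_{n,k}$ (keeping the given colors), and it uniquely extends to $L(n,k)$ if there is exactly one such way. *)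

(* Defs.v *)
From mathcomp Require Import all_boot.
Set Implicit Arguments. Unset Strict Implicit. Unset Printing Implicit Defensive.

(* A fully colored n x n square with colors in {1..k}, encoded as 'I_k
   (color c+1 represented by c). Entry (i,j): row i, column j. *)
Definition full_square (n k : nat) := 'I_n -> 'I_n -> 'I_k.

Definition in_L (n k : nat) (L : full_square n k) : Prop :=
  (forall i j1 j2, j1 != j2 -> L i j1 != L i j2) /\
  (forall i1 i2 j, i1 != i2 -> L i1 j != L i2 j).

(* A partial coloring: None = uncolored. *)
Definition partial_coloring (n k : nat) := 'I_n -> 'I_n -> option 'I_k.

Definition extension_of (n k : nat) (P : partial_coloring n k)
    (L : full_square n k) : Prop :=
  in_L L /\ (forall i j c, P i j = Some c -> L i j = c).

Definition extends (n k : nat) (P : partial_coloring n k) : Prop :=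
  exists L, extension_of P L.

Definition uniquely_extends (n k : nat) (P : partial_coloring n k) : Prop :=
  exists L, extension_of P L /\
    forall L', extension_of P L' -> forall i j, L' i j = L i j.

Definition num_uncolored (n k : nat) (P : partial_coloring n k) : nat :=
  #|[set ij : 'I_n * 'I_n | P ij.1 ij.2 == None]|.

(* Main.v *)
Require Import Defs.
From mathcomp Require Import all_boot zify.
Set Warnings "-spurious-ssr-injection".
Set Implicit Arguments. Unset Strict Implicit. Unset Printing Implicit Defensive.



Section P5.
Variable T : eqType.
Variables (A1 A2 A3 A4 A5 A6 : T -> Prop) (e b a c d k m g h : T).
Hypotheses (e1 : A1 e) (e2 : A2 e) (b3 : A3 b) (b2 : A2 b) (a3 : A3 a) (a4 : A4 a)
 (c5 : A5 c) (c4 : A4 c) (d5 : A5 d) (d6 : A6 d) (k1 : A1 k) (k4 : A4 k) (m1 : A1 m) (m6 : A6 m)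
 (g3 : A3 g) (g6 : A6 g) (h5 : A5 h) (h2 : A2 h).
Hypotheses (G2 : forall x, A2 x \/ A3 x) (G3 : forall x, A3 x \/ A4 x) (G4 : forall x, A4 x \/ A5 x).
Hypotheses (U1 : forall x y, A1 x -> A2 x -> A1 y -> A2 y -> x <> e -> y <> e -> x = y)
 (U2 : forall x y, A2 x -> A3 x -> A2 y -> A3 y -> x <> b -> y <> b -> x = y)
 (U3 : forall x y, A3 x -> A4 x -> A3 y -> A4 y -> x <> a -> y <> a -> x = y)
 (U4 : forall x y, A4 x -> A5 x -> A4 y -> A5 y -> x <> c -> y <> c -> x = y)
 (U5 : forall x y, A5 x -> A6 x -> A5 y -> A6 y -> x <> d -> y <> d -> x = y).
Hypotheses (ek : e <> k) (em : e <> m) (km : k <> m) (ba : b <> a) (bg : b <> g) (ag : a <> g)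
  (hc : h <> c) (hd : h <> d) (cd : c <> d) (eb : e <> b) (eh : e <> h) (bh : b <> h)
  (ka : k <> a) (kc : k <> c) (ac : a <> c) (mg : m <> g) (md : m <> d) (gd : g <> d).
Hypotheses (S1 : A1 b \/ A3 e) (S2 : A2 a \/ A4 b) (S3 : A3 c \/ A5 a) (S4 : A4 d \/ A6 c).

Lemma p5_caseA : A4 b -> False.
Proof using All.
move=> b4.
have g5 : A5 g.
  case: (G4 g) => // g4; exfalso; apply: bg.
  exact: (U3 b3 b4 g3 g4 ba (not_eq_sym ag)).
have k2 : A2 k.
  case: (G2 k) => // k3.
  by rewrite (U3 k3 k4 b3 b4 ka ba).
have m3 : A3 m.
  case: (G2 m) => // m2; exfalso; apply: km.
  exact: (U1 k1 k2 m1 m2 (not_eq_sym ek) (not_eq_sym em)).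
have m4 : A4 m.
  case: (G4 m) => // m5; exfalso; apply: mg.
  exact: (U5 m5 m6 g5 g6 md gd).
have ma : m = a.
  case: (eqVneq m a) => // /eqP ma.
  have mb := U3 m3 m4 b3 b4 ma ba.
  exfalso; apply: km; apply: (U1 k1 k2 m1 _ (not_eq_sym ek) (not_eq_sym em)).
  by rewrite mb.
have a1 : A1 a by rewrite -ma.
have a6 : A6 a by rewrite -ma.
case: S3 => [c3|a5].
  have cb := U3 c3 c4 b3 b4 (not_eq_sym ac) ba.
  have b5 : A5 b by rewrite -cb.
  case: S4 => [d4|c6].
    case: S1 => [b1|e3].
      apply: kc; rewrite cb.
      exact: (U1 k1 k2 b1 b2 (not_eq_sym ek) (not_eq_sym eb)).
    case: (G3 h) => [h3|h4].
      apply: eh; exact: (U2 e2 e3 h2 h3 eb (not_eq_sym bh)).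
    apply: hd; exact: (U4 h4 h5 d4 d5 hc (not_eq_sym cd)).
  apply: bg; rewrite -cb; exact: (U5 c5 c6 g5 g6 cd gd).
apply: ag; apply: (U5 a5 a6 g5 g6 _ gd).
by rewrite -ma.
Qed.

Lemma p5_caseC : A2 a -> A5 a -> ~ A4 b -> ~ A3 c -> False.
Proof using All.
move=> a2 a5 nb4 nc3.
have ha : h = a.
  case: (G3 h) => [h3|h4].
    exact: (U2 h2 h3 a2 a3 (not_eq_sym bh) (not_eq_sym ba)).
  exact: (U4 h4 h5 a4 a5 hc ac).
have b1 : A1 b.
  case: S1 => // e3; exfalso; apply: eh; rewrite ha.
  exact: (U2 e2 e3 a2 a3 eb (not_eq_sym ba)).
have c6 : A6 c.
  case: S4 => // d4; exfalso; apply: hd; rewrite ha.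
  exact: (U4 a4 a5 d4 d5 ac (not_eq_sym cd)).
have k3 : A3 k.
  case: (G2 k) => // k2; exfalso; apply: nb4.
  by rewrite -(U1 k1 k2 b1 b2 (not_eq_sym ek) (not_eq_sym eb)).
case: (G2 m) => [m2|m3].
  have mb := U1 m1 m2 b1 b2 (not_eq_sym em) (not_eq_sym eb).
  have b6 : A6 b by rewrite -mb.
  case: (G4 b) => // b5.
  apply: nc3; rewrite -(U5 b5 b6 c5 c6 _ cd) //.
  by rewrite -mb.
case: (G4 m) => [m4|m5].
  case: (eqVneq m a) => [ma|/eqP nma].
    have a1 : A1 a by rewrite -ma.
    apply: ba; apply: (U1 b1 b2 a1 a2 (not_eq_sym eb)).
    by move=> ae; apply: eh; rewrite ha -ae.
  by apply: km; exact: (U3 k3 k4 m3 m4 ka nma).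
have mc := U5 m5 m6 c5 c6 md cd.
have c1 : A1 c by rewrite -mc.
case: (G2 c) => // c2.
apply: nc3; rewrite (U1 c1 c2 b1 b2 _ (not_eq_sym eb)) //.
by rewrite -mc; apply: not_eq_sym.
Qed.

End P5.

Ltac p5close := try (by apply: not_eq_sym);
  try (move=> x; match goal with G : forall x, _ |- _ => solve [case: (G x); auto] end);
  try (by move=> x y H1 H2 H3 H4 H5 H6; match goal with U : forall x y, _ |- _ => apply: U end);
  try (match goal with S : _ \/ _ |- _ => solve [case: S; auto] end).
Lemma p5_main (T : eqType) (A1 A2 A3 A4 A5 A6 : T -> Prop) (e b a c d k m g h : T)
 (e1 : A1 e) (e2 : A2 e) (b3 : A3 b) (b2 : A2 b) (a3 : A3 a) (a4 : A4 a)
 (c5 : A5 c) (c4 : A4 c) (d5 : A5 d) (d6 : A6 d) (k1 : A1 k) (k4 : A4 k) (m1 : A1 m) (m6 : A6 m)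
 (g3 : A3 g) (g6 : A6 g) (h5 : A5 h) (h2 : A2 h)
 (G2 : forall x, A2 x \/ A3 x) (G3 : forall x, A3 x \/ A4 x) (G4 : forall x, A4 x \/ A5 x)
 (U1 : forall x y, A1 x -> A2 x -> A1 y -> A2 y -> x <> e -> y <> e -> x = y)
 (U2 : forall x y, A2 x -> A3 x -> A2 y -> A3 y -> x <> b -> y <> b -> x = y)
 (U3 : forall x y, A3 x -> A4 x -> A3 y -> A4 y -> x <> a -> y <> a -> x = y)
 (U4 : forall x y, A4 x -> A5 x -> A4 y -> A5 y -> x <> c -> y <> c -> x = y)
 (U5 : forall x y, A5 x -> A6 x -> A5 y -> A6 y -> x <> d -> y <> d -> x = y)
 (ek : e <> k) (em : e <> m) (km : k <> m) (ba : b <> a) (bg : b <> g) (ag : a <> g)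
  (hc : h <> c) (hd : h <> d) (cd : c <> d) (eb : e <> b) (eh : e <> h) (bh : b <> h)
  (ka : k <> a) (kc : k <> c) (ac : a <> c) (mg : m <> g) (md : m <> d) (gd : g <> d)
 (S1 : A1 b \/ A3 e) (S2 : A2 a \/ A4 b) (S3 : A3 c \/ A5 a) (S4 : A4 d \/ A6 c) : False.
Proof.
have nb4 : ~ A4 b.
  move=> b4; apply: (p5_caseA (A1:=A1) (A2:=A2) (A3:=A3) (A4:=A4) (A5:=A5) (A6:=A6)
     (e:=e) (b:=b) (a:=a) (c:=c) (d:=d) (k:=k) (m:=m) (g:=g) (h:=h)) => //; p5close.
have nc3 : ~ A3 c.
  move=> c3; apply: (p5_caseA (A1:=A6) (A2:=A5) (A3:=A4) (A4:=A3) (A5:=A2) (A6:=A1)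
     (e:=d) (b:=c) (a:=a) (c:=b) (d:=e) (k:=g) (m:=m) (g:=k) (h:=h)) => //;
  p5close.
case: S2 => [a2|/nb4 //]; case: S3 => [/nc3 //|a5].
apply: (p5_caseC (A1:=A1) (A2:=A2) (A3:=A3) (A4:=A4) (A5:=A5) (A6:=A6)
     (e:=e) (b:=b) (a:=a) (c:=c) (d:=d) (k:=k) (m:=m) (g:=g) (h:=h)) => //; p5close.
Qed.



Ltac cond := let H := fresh in move=> H;
  first [ by left | by right | solve [left; congruence] | solve [right; congruence]
        | match goal with Hn : is_true (~~ _) |- _ => solve [rewrite H in Hn; done] end ].

Lemma c4_logic (T : eqType) (R R' C C' : pred T) (a b c t : T)
  (Ra : R a) (Rb : R b) (Ca : C a) (Cc : C c) (R'c : R' c) (R't : R' t) (C'b : C' b) (C't : C' t)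
  (ab : a <> b) (ac : a <> c) (bt : b <> t) (ct : c <> t)
  (Uu : forall x y, R x -> C x -> R y -> C y -> x <> a -> y <> a -> x = y)
  (Uw : forall x y, R x -> C' x -> R y -> C' y -> x <> b -> y <> b -> x = y)
  (Uz : forall x y, R' x -> C x -> R' y -> C y -> x <> c -> y <> c -> x = y)
  (Um : forall x y, R' x -> C' x -> R' y -> C' y -> x <> t -> y <> t -> x = y)
  (Hrect : forall y11 y12 y21 y22, y11 <> y12 -> y21 <> y22 -> y11 <> y21 -> y12 <> y22 ->
     (R y11 -> y11 = a \/ y11 = b) -> (R y12 -> y12 = a \/ y12 = b) ->
     (R' y21 -> y21 = c \/ y21 = t) -> (R' y22 -> y22 = c \/ y22 = t) ->
     (C y11 -> y11 = a \/ y11 = c) -> (C y21 -> y21 = a \/ y21 = c) ->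
     (C' y12 -> y12 = b \/ y12 = t) -> (C' y22 -> y22 = b \/ y22 = t) ->
     y11 = a /\ y12 = b /\ y21 = c /\ y22 = t) : False.
Proof.
have Hr := Hrect.
have mv : forall y11 y12 y21 y22, ~ (y11 = a /\ y12 = b /\ y21 = c /\ y22 = t) ->
     y11 <> y12 -> y21 <> y22 -> y11 <> y21 -> y12 <> y22 ->
     (R y11 -> y11 = a \/ y11 = b) -> (R y12 -> y12 = a \/ y12 = b) ->
     (R' y21 -> y21 = c \/ y21 = t) -> (R' y22 -> y22 = c \/ y22 = t) ->
     (C y11 -> y11 = a \/ y11 = c) -> (C y21 -> y21 = a \/ y21 = c) ->
     (C' y12 -> y12 = b \/ y12 = t) -> (C' y22 -> y22 = b \/ y22 = t) -> False.
  move=> y11 y12 y21 y22 ne H1 H2 H3 H4 H5 H6 H7 H8 H9 H10 H11 H12; apply: ne.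
  exact: (Hrect _ _ _ _ H1 H2 H3 H4 H5 H6 H7 H8 H9 H10 H11 H12).
case: (eqVneq b c) => [bc|/eqP nbc].
  subst c.
  case: (eqVneq a t) => [at_|/eqP nat].
    subst t.
    by apply: (mv b a a b) => //; try (by move=> [? [? [? ?]]]; congruence); try congruence; cond.
  have n1 : ~~ (R t && C t).
    apply/negP => /andP[Rt Ct]; apply: bt; symmetry.
    by apply: Uu => //; congruence.
  have n2 : ~~ (R' a && C' a).
    apply/negP => /andP[R'a C'a]; apply: ab.
    by apply: Um => //; congruence.
  have n3 : ~~ (R t && C' a).
    apply/negP => /andP[Rt C'a]; apply: nat; symmetry.
    by apply: Uw => //; congruence.
  have n4 : ~~ (R' a && C t).
    apply/negP => /andP[R'a Ct]; apply: nat.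
    by apply: Uz => //; congruence.
  have cw : R t || R' a.
    apply/negPn/negP => /norP[nRt nR'a].
    by apply: (mv b t a b) => //; try (by move=> [? [? [? ?]]]; congruence); try congruence; cond.
  have ccw : C t || C' a.
    apply/negPn/negP => /norP[nCt nC'a].
    by apply: (mv b a t b) => //; try (by move=> [? [? [? ?]]]; congruence); try congruence; cond.
  have m1 : R' a || C' a.
    apply/negPn/negP => /norP[nR'a nC'a].
    by apply: (mv b a a t) => //; try (by move=> [? [? [? ?]]]; congruence); try congruence; cond.
  have m2 : R t || C t.
    apply/negPn/negP => /norP[nRt nCt].
    by apply: (mv a t t b) => //; try (by move=> [? [? [? ?]]]; congruence); try congruence; cond.
  move: n1 n2 n3 n4 cw ccw m1 m2.
  by case: (R t); case: (C t); case: (R' a); case: (C' a).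
case: (eqVneq a t) => [at_|/eqP nat].
  subst t.
  have n1 : ~~ (C b && R c).
    apply/negP => /andP[Cb Rc]; apply: nbc.
    by apply: Uu => //; congruence.
  have n2 : ~~ (R' b && C' c).
    apply/negP => /andP[R'b C'c]; apply: nbc.
    by apply: Um => //; congruence.
  have n3 : ~~ (R c && C' c).
    apply/negP => /andP[Rc C'c]; apply: ac; symmetry.
    by apply: Uw => //; congruence.
  have n4 : ~~ (R' b && C b).
    apply/negP => /andP[R'b Cb]; apply: ab; symmetry.
    by apply: Uz => //; congruence.
  have m3 : R' b || C b.
    apply/negPn/negP => /norP[nR'b nCb].
    by apply: (mv b a c b) => //; try (by move=> [? [? [? ?]]]; congruence); try congruence; cond.
  have m4 : R c || C' c.
    apply/negPn/negP => /norP[nRc nC'c].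
    by apply: (mv c b a c) => //; try (by move=> [? [? [? ?]]]; congruence); try congruence; cond.
  have cw : C b || C' c.
    apply/negPn/negP => /norP[nCb nC'c].
    by apply: (mv b a a c) => //; try (by move=> [? [? [? ?]]]; congruence); try congruence; cond.
  have ccw : R c || R' b.
    apply/negPn/negP => /norP[nRc nR'b].
    by apply: (mv c a a b) => //; try (by move=> [? [? [? ?]]]; congruence); try congruence; cond.
  move: n1 n2 n3 n4 m3 m4 cw ccw.
  by case: (R c); case: (C b); case: (R' b); case: (C' c).
have n1 : ~~ (C b && R c).
  apply/negP => /andP[Cb Rc]; apply: nbc.
  by apply: Uu => //; congruence.
have n2 : ~~ (C' a && R t).
  apply/negP => /andP[C'a Rt]; apply: nat.
  by apply: Uw => //; congruence.
have n3 : ~~ (R' a && C t).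
  apply/negP => /andP[R'a Ct]; apply: nat.
  by apply: Uz => //; congruence.
have n4 : ~~ (R' b && C' c).
  apply/negP => /andP[R'b C'c]; apply: nbc.
  by apply: Um => //; congruence.
have s1 : C b || C' a.
  apply/negPn/negP => /norP[nCb nC'a].
  by apply: (mv b a c t) => //; try (by move=> [? [? [? ?]]]; congruence); try congruence; cond.
have s2 : R c || R' a.
  apply/negPn/negP => /norP[nRc nR'a].
  by apply: (mv c b a t) => //; try (by move=> [? [? [? ?]]]; congruence); try congruence; cond.
have s3 : C t || C' c.
  apply/negPn/negP => /norP[nCt nC'c].
  by apply: (mv a b t c) => //; try (by move=> [? [? [? ?]]]; congruence); try congruence; cond.
have s4 : R t || R' b.
  apply/negPn/negP => /norP[nRt nR'b].
  by apply: (mv a t c b) => //; try (by move=> [? [? [? ?]]]; congruence); try congruence; cond.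
have cw : [|| R t, R' a, C b | C' c].
  apply/negPn/negP => /norP[nRt /norP[nR'a /norP[nCb nC'c]]].
  by apply: (mv b t a c) => //; try (by move=> [? [? [? ?]]]; congruence); try congruence; cond.
have ccw : [|| R c, R' b, C t | C' a].
  apply/negPn/negP => /norP[nRc /norP[nR'b /norP[nCt nC'a]]].
  by apply: (mv c a t b) => //; try (by move=> [? [? [? ?]]]; congruence); try congruence; cond.
move: n1 n2 n3 n4 s1 s2 s3 s4 cw ccw.
by case: (R c); case: (R t); case: (R' a); case: (R' b); case: (C b); case: (C t); case: (C' a); case: (C' c).
Qed.

Section Main.
Variable n : nat.
Local Notation K := (2 * n - 2).
Variables (P : partial_coloring n K) (L : full_square n K).
Hypothesis LP : extension_of P L.
Hypothesis Luniq : forall L', extension_of P L' -> forall i j, L' i j = L i j.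

Definition Rs i := [set L i j | j : 'I_n].
Definition Cs j := [set L i j | i : 'I_n].
Definition unc i j := P i j == None.

Lemma rinj i : injective (L i).
Proof.
move=> j1 j2 e; apply/eqP; apply: contraLR isT => ne.
by have /eqP := LP.1.1 i j1 j2 ne.
Qed.

Lemma cinj j : injective (fun i => L i j).
Proof.
move=> i1 i2 /= e; apply/eqP; apply: contraLR isT => ne.
by have /eqP := LP.1.2 i1 i2 j ne.
Qed.

Lemma inRs i j : L i j \in Rs i. Proof. by apply/imsetP; exists j. Qed.
Lemma inCs i j : L i j \in Cs j. Proof. by apply/imsetP; exists i. Qed.

Lemma move_gen (D : 'I_n -> 'I_n -> bool) (y : 'I_n -> 'I_n -> 'I_K) :
  (forall i j, D i j -> unc i j) ->
  (forall i j j', D i j -> j' != j -> D i j' -> y i j' != y i j) ->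
  (forall i j j', D i j -> j' != j -> ~~ D i j' -> L i j' != y i j) ->
  (forall i i' j, D i j -> i' != i -> D i' j -> y i' j != y i j) ->
  (forall i i' j, D i j -> i' != i -> ~~ D i' j -> L i' j != y i j) ->
  forall i j, D i j -> y i j = L i j.
Proof.
move=> Du H1 H2 H3 H4 i j Dij.
pose L' : full_square n K := fun i j => if D i j then y i j else L i j.
have ext : extension_of P L'.
  split; [split|].
  - move=> i0 j1 j2 ne; rewrite /L'.
    case D1: (D i0 j1); case D2: (D i0 j2).
    + by rewrite eq_sym H1 // eq_sym.
    + by rewrite eq_sym H2 ?D2 // eq_sym.
    + by rewrite H2 ?D1.
    + exact: LP.1.1.
  - move=> i1 i2 j0 ne; rewrite /L'.
    case D1: (D i1 j0); case D2: (D i2 j0).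
    + by rewrite eq_sym H3 // eq_sym.
    + by rewrite eq_sym H4 ?D2 // eq_sym.
    + by rewrite H4 ?D1.
    + exact: LP.1.2.
  - move=> i0 j0 c Pc; rewrite /L'.
    case D0: (D i0 j0); last exact: LP.2.
    by move: (Du _ _ D0); rewrite /unc Pc.
by have := Luniq ext i j; rewrite /L' Dij.
Qed.


Lemma Gl i j x : unc i j -> (x \in Rs i) || (x \in Cs j).
Proof.
move=> u; apply/negPn/negP => /norP[nR nC].
suff: x = L i j by move=> e; move: nR; rewrite e inRs.
apply: (@move_gen (fun i0 j0 => (i0 == i) && (j0 == j)) (fun _ _ => x)).
- by move=> i0 j0 /andP[/eqP-> /eqP->].
- by move=> i0 j0 j' /andP[_ /eqP->] ne /andP[_ /eqP e]; rewrite e eqxx in ne.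
- move=> i0 j0 j' /andP[/eqP-> _] _ _; apply: contraNneq nR => <-; exact: inRs.
- by move=> i0 i' j0 /andP[/eqP-> _] ne /andP[/eqP e _]; rewrite e eqxx in ne.
- move=> i0 i' j0 /andP[_ /eqP->] _ _; apply: contraNneq nC => <-; exact: inCs.
- by rewrite !eqxx.
Qed.

Lemma Sl i j1 j2 : unc i j1 -> unc i j2 -> j1 != j2 ->
  (L i j2 \in Cs j1) || (L i j1 \in Cs j2).
Proof.
move=> u1 u2 ne; apply/negPn/negP => /norP[n1 n2].
suff: (fun (_ : 'I_n) j0 => if j0 == j1 then L i j2 else L i j1) i j1 = L i j1.
  by rewrite /= eqxx => /(@rinj i) e; rewrite e eqxx in ne.
apply: (@move_gen (fun i0 j0 => (i0 == i) && ((j0 == j1) || (j0 == j2)))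
   (fun _ j0 => if j0 == j1 then L i j2 else L i j1)).
- by move=> i0 j0 /andP[/eqP-> /orP[/eqP->|/eqP->]].
- move=> i0 j j' /andP[_ Hj] nj /andP[_ Hj'].
  have ne' : j2 != j1 by rewrite eq_sym.
  case/orP: Hj => /eqP ej; case/orP: Hj' => /eqP ej'; rewrite ej ej' in nj *;
  by rewrite ?eqxx ?(negbTE ne) ?(negbTE ne') ?(inj_eq (@rinj i)) ?ne ?ne' ?eqxx in nj *.
- move=> i0 j j' /andP[/eqP-> _] _; rewrite eqxx /= => /norP[a b].
  by case: ifP => _; rewrite (inj_eq (@rinj i)).
- by move=> i0 i' j /andP[/eqP-> _] nei /andP[/eqP e _]; rewrite e eqxx in nei.
- move=> i0 i' j /andP[/eqP-> /orP[/eqP->|/eqP->]] _ _.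
    by rewrite eqxx; apply: contraNneq n1 => <-; exact: inCs.
  rewrite ifN_eq //; apply: contraNneq n2 => <-; exact: inCs.
- by rewrite !eqxx.
Qed.

Lemma card_Rs i : #|Rs i| = n.
Proof. by rewrite card_imset ?card_ord //; exact: rinj. Qed.

Lemma card_Cs j : #|Cs j| = n.
Proof. by rewrite card_imset ?card_ord //; exact: cinj. Qed.

Lemma card_I2 i j : unc i j -> #|Rs i :&: Cs j| = 2.
Proof.
move=> u.
have U : Rs i :|: Cs j = setT by apply/setP => z; rewrite inE in_setT; exact: Gl.
have := cardsUI (Rs i) (Cs j); rewrite U cardsT card_ord card_Rs card_Cs.
have : 0 < n := leq_ltn_trans (leq0n _) (ltn_ord i).
by move=> ? ?; lia.
Qed.

Lemma Ul i j x y : unc i j -> x \in Rs i -> x \in Cs j -> y \in Rs i -> y \in Cs j ->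
  x <> L i j -> y <> L i j -> x = y.
Proof.
move=> u xR xC yR yC /eqP xa /eqP ya; apply/eqP; apply: contraT => nxy.
have sub : L i j |: [set x; y] \subset Rs i :&: Cs j.
  apply/subsetP => z; rewrite !inE => /orP[|/orP[]] /eqP->; by rewrite ?inRs ?inCs ?xR ?xC ?yR ?yC.
have := subset_leq_card sub; rewrite card_I2 //.
rewrite cardsU1 cards2 !inE negb_or eq_sym xa eq_sym ya /= nxy.
by [].
Qed.

Lemma rot3 i j1 j2 j3 y1 y2 y3 : unc i j1 -> unc i j2 -> unc i j3 ->
  j1 != j2 -> j1 != j3 -> j2 != j3 -> y1 != y2 -> y1 != y3 -> y2 != y3 ->
  [|| y1 == L i j1, y1 == L i j2 | y1 == L i j3] ->
  [|| y2 == L i j1, y2 == L i j2 | y2 == L i j3] ->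
  [|| y3 == L i j1, y3 == L i j2 | y3 == L i j3] ->
  y1 \notin Cs j1 -> y2 \notin Cs j2 -> y3 \notin Cs j3 -> False.
Proof.
move=> u1 u2 u3 n12 n13 n23 m12 m13 m23 r1 r2 r3 c1 c2 c3.
pose D i0 j0 := (i0 == i) && [|| j0 == j1, j0 == j2 | j0 == j3].
pose y (i0 : 'I_n) j0 := if j0 == j1 then y1 else if j0 == j2 then y2 else y3.
have n21 : j2 != j1 by rewrite eq_sym.
have n31 : j3 != j1 by rewrite eq_sym.
have n32 : j3 != j2 by rewrite eq_sym.
have hy : forall j, [|| j == j1, j == j2 | j == j3] ->
   [|| y i j == L i j1, y i j == L i j2 | y i j == L i j3] /\ y i j \notin Cs j.
  move=> j /or3P[] /eqP->; rewrite /y ?eqxx ?(negbTE n21) ?(negbTE n31) ?(negbTE n32) //.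
suff: y i j1 = L i j1 by rewrite /y eqxx => e; move: c1; rewrite e inCs.
apply: (@move_gen D y).
- by move=> i0 j0 /andP[/eqP-> /or3P[] /eqP->].
- move=> i0 j j' /andP[_ Hj] nj /andP[_ Hj'].
  case/or3P: Hj => /eqP ej; case/or3P: Hj' => /eqP ej'; rewrite ej ej' in nj *;
  rewrite /y ?eqxx ?(negbTE n12) ?(negbTE n13) ?(negbTE n23) ?(negbTE n21) ?(negbTE n31)
     ?(negbTE n32) ?eqxx // in nj *; by rewrite eq_sym.
- move=> i0 j j' /andP[/eqP-> Hj] _; rewrite /D eqxx /= => Hj'.
  have [+ _] := hy j Hj.
  case/or3P => /eqP ->; rewrite (inj_eq (@rinj i)); apply: contraNneq Hj' => ->;
  by rewrite eqxx ?orbT.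
- by move=> i0 i' j /andP[/eqP-> _] nei /andP[/eqP e _]; rewrite e eqxx in nei.
- move=> i0 i' j /andP[/eqP-> Hj] _ _.
  have [_ +] := hy j Hj; apply: contraNneq => <-; exact: inCs.
- by rewrite /D !eqxx.
Qed.

Lemma Tl i j1 j2 j3 : unc i j1 -> unc i j2 -> unc i j3 ->
  j1 != j2 -> j1 != j3 -> j2 != j3 -> False.
Proof.
move=> u1 u2 u3 n12 n13 n23.
have n21 : j2 != j1 by rewrite eq_sym.
have n31 : j3 != j1 by rewrite eq_sym.
have n32 : j3 != j2 by rewrite eq_sym.
have s12 := Sl u1 u2 n12.
have s13 := Sl u1 u3 n13.
have s23 := Sl u2 u3 n23.
have ne : forall a b, a != b -> L i a != L i b by move=> a b; rewrite (inj_eq (@rinj i)).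
have x1 : ~~ ((L i j2 \in Cs j1) && (L i j3 \in Cs j1)).
  apply/negP => /andP[h1 h2]; move/eqP: (ne _ _ n23); apply.
  by apply: (Ul u1) => //; rewrite ?inRs //; apply/eqP; apply: ne.
have x2 : ~~ ((L i j1 \in Cs j2) && (L i j3 \in Cs j2)).
  apply/negP => /andP[h1 h2]; move/eqP: (ne _ _ n13); apply.
  by apply: (Ul u2) => //; rewrite ?inRs //; apply/eqP; apply: ne.
have x3 : ~~ ((L i j1 \in Cs j3) && (L i j2 \in Cs j3)).
  apply/negP => /andP[h1 h2]; move/eqP: (ne _ _ n12); apply.
  by apply: (Ul u3) => //; rewrite ?inRs //; apply/eqP; apply: ne.
have r1 : [|| L i j2 \in Cs j1, L i j3 \in Cs j2 | L i j1 \in Cs j3].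
  apply/negPn/negP => /norP[h1 /norP[h2 h3]].
  by apply: (@rot3 i j1 j2 j3 (L i j2) (L i j3) (L i j1)) => //; rewrite ?ne ?eqxx ?orbT.
have r2 : [|| L i j3 \in Cs j1, L i j1 \in Cs j2 | L i j2 \in Cs j3].
  apply/negPn/negP => /norP[h1 /norP[h2 h3]].
  by apply: (@rot3 i j1 j2 j3 (L i j3) (L i j1) (L i j2)) => //; rewrite ?ne ?eqxx ?orbT.
move: s12 s13 s23 x1 x2 x3 r1 r2.
by case: (L i j2 \in Cs j1); case: (L i j3 \in Cs j1); case: (L i j1 \in Cs j2);
   case: (L i j3 \in Cs j2); case: (L i j1 \in Cs j3); case: (L i j2 \in Cs j3).
Qed.

Lemma rect i1 i2 j1 j2 y11 y12 y21 y22 :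
  unc i1 j1 -> unc i1 j2 -> unc i2 j1 -> unc i2 j2 -> i1 != i2 -> j1 != j2 ->
  y11 <> y12 -> y21 <> y22 -> y11 <> y21 -> y12 <> y22 ->
  (y11 \in Rs i1 -> y11 = L i1 j1 \/ y11 = L i1 j2) ->
  (y12 \in Rs i1 -> y12 = L i1 j1 \/ y12 = L i1 j2) ->
  (y21 \in Rs i2 -> y21 = L i2 j1 \/ y21 = L i2 j2) ->
  (y22 \in Rs i2 -> y22 = L i2 j1 \/ y22 = L i2 j2) ->
  (y11 \in Cs j1 -> y11 = L i1 j1 \/ y11 = L i2 j1) ->
  (y21 \in Cs j1 -> y21 = L i1 j1 \/ y21 = L i2 j1) ->
  (y12 \in Cs j2 -> y12 = L i1 j2 \/ y12 = L i2 j2) ->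
  (y22 \in Cs j2 -> y22 = L i1 j2 \/ y22 = L i2 j2) ->
  y11 = L i1 j1 /\ y12 = L i1 j2 /\ y21 = L i2 j1 /\ y22 = L i2 j2.
Proof.
move=> u11 u12 u21 u22 ni nj d1 d2 d3 d4 r11 r12 r21 r22 c11 c21 c12 c22.
have ni' : i2 != i1 by rewrite eq_sym.
have nj' : j2 != j1 by rewrite eq_sym.
pose D (i0 j0 : 'I_n) := ((i0 == i1) || (i0 == i2)) && ((j0 == j1) || (j0 == j2)).
pose y (i0 j0 : 'I_n) := if i0 == i1 then (if j0 == j1 then y11 else y12)
                          else (if j0 == j1 then y21 else y22).
have hR : forall i0 j, D i0 j -> y i0 j \in Rs i0 -> y i0 j = L i0 j1 \/ y i0 j = L i0 j2.
  move=> i0 j /andP[/orP[]/eqP-> /orP[]/eqP->];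
  by rewrite /y ?eqxx ?(negbTE ni') ?(negbTE nj').
have hC : forall i0 j, D i0 j -> y i0 j \in Cs j -> y i0 j = L i1 j \/ y i0 j = L i2 j.
  move=> i0 j /andP[/orP[]/eqP-> /orP[]/eqP->];
  by rewrite /y ?eqxx ?(negbTE ni') ?(negbTE nj').
have key : forall i0 j0, D i0 j0 -> y i0 j0 = L i0 j0.
  apply: (@move_gen D y).
  - by move=> i0 j0 /andP[/orP[]/eqP-> /orP[]/eqP->].
  - move=> i0 j j' /andP[Hi Hj] nj0 /andP[_ Hj'].
    case/orP: Hi => /eqP->; case/orP: Hj => /eqP ej; case/orP: Hj' => /eqP ej';
    rewrite ej ej' ?eqxx in nj0 *; rewrite /y ?eqxx ?(negbTE ni') ?(negbTE nj') //;
    apply/eqP; congruence.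
  - move=> i0 j j' Dj nj0 nDj'; apply/eqP => E.
    have := hR i0 j Dj; rewrite -E inRs => /(_ isT) [/(@rinj i0) e|/(@rinj i0) e];
    by move: nDj' Dj; rewrite /D e eqxx ?orbT /= => + /andP[Hi _]; rewrite Hi; case/negP.
  - move=> i0 i' j /andP[Hi Hj] ni0 /andP[Hi' _].
    case/orP: Hj => /eqP->; case/orP: Hi => /eqP ei; case/orP: Hi' => /eqP ei';
    rewrite ei ei' ?eqxx in ni0 *; rewrite /y ?eqxx ?(negbTE ni') ?(negbTE nj') //;
    apply/eqP; congruence.
  - move=> i0 i' j Dj ni0 nDi'; apply/eqP => E.
    have := hC i0 j Dj; rewrite -E inCs => /(_ isT) [/(@cinj j) e|/(@cinj j) e];
    by move: nDi' Dj; rewrite /D e eqxx ?orbT /= => + /andP[_ Hj]; rewrite Hj; case/negP.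
have k11 := key i1 j1; have k12 := key i1 j2; have k21 := key i2 j1; have k22 := key i2 j2.
rewrite /D /y ?eqxx ?(negbTE ni') ?(negbTE nj') ?orbT /= in k11 k12 k21 k22.
by rewrite k11 ?k12 ?k21 ?k22.
Qed.

End Main.

Section Transp.
Variable n : nat.
Local Notation K := (2 * n - 2).
Variables (P : partial_coloring n K) (L : full_square n K).
Hypothesis LP : extension_of P L.
Hypothesis Luniq : forall L', extension_of P L' -> forall i j, L' i j = L i j.

Definition PT : partial_coloring n K := fun i j => P j i.
Definition LT : full_square n K := fun i j => L j i.

Lemma LTP : extension_of PT LT.
Proof.
case: LP => [[r c] e]; split; [split|].
- by move=> i j1 j2 ne; exact: c.
- by move=> i1 i2 j ne; exact: r.
- by move=> i j col; exact: e.
Qed.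

Lemma LTuniq : forall L', extension_of PT L' -> forall i j, L' i j = LT i j.
Proof.
move=> L' [[r c] e] i j.
have ext : extension_of P (fun i j => L' j i).
  split; [split|].
  - by move=> i0 j1 j2 ne; exact: c.
  - by move=> i1 i2 j0 ne; exact: r.
  - by move=> i0 j0 col; exact: e.
exact: (Luniq ext j i).
Qed.

Lemma Sl_col i1 i2 j : unc P i1 j -> unc P i2 j -> i1 != i2 ->
  (L i2 j \in Rs L i1) || (L i1 j \in Rs L i2).
Proof. exact: (Sl LTP LTuniq). Qed.

Lemma Tl_col i1 i2 i3 j : unc P i1 j -> unc P i2 j -> unc P i3 j ->
  i1 != i2 -> i1 != i3 -> i2 != i3 -> False.
Proof. exact: (Tl LTP LTuniq). Qed.

End Transp.

Section Conf.
Variable n : nat.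
Local Notation K := (2 * n - 2).
Variables (P : partial_coloring n K) (L : full_square n K).
Hypothesis LP : extension_of P L.
Hypothesis Luniq : forall L', extension_of P L' -> forall i j, L' i j = L i j.

Lemma rne i a b : a != b -> L i a <> L i b.
Proof. by move=> ne /(rinj LP) e; rewrite e eqxx in ne. Qed.
Lemma cne j a b : a != b -> L a j <> L b j.
Proof. by move=> ne /(cinj LP) e; rewrite e eqxx in ne. Qed.

Lemma cyc4 i1 i2 j1 j2 : unc P i1 j1 -> unc P i1 j2 -> unc P i2 j1 -> unc P i2 j2 ->
  i1 != i2 -> j1 != j2 -> False.
Proof.
move=> u11 u12 u21 u22 ni nj.
have ni' : i2 != i1 by rewrite eq_sym.
have nj' : j2 != j1 by rewrite eq_sym.
apply: (@c4_logic _ (fun x => x \in Rs L i1) (fun x => x \in Rs L i2)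
   (fun x => x \in Cs L j1) (fun x => x \in Cs L j2)
   (L i1 j1) (L i1 j2) (L i2 j1) (L i2 j2)); rewrite /= ?inRs ?inCs //;
  try (by apply: rne); try (by apply: cne).
- by move=> x y *; apply: (Ul LP Luniq u11).
- by move=> x y *; apply: (Ul LP Luniq u12).
- by move=> x y *; apply: (Ul LP Luniq u21).
- by move=> x y *; apply: (Ul LP Luniq u22).
- by move=> y11 y12 y21 y22; exact: (rect LP Luniq u11 u12 u21 u22 ni nj).
Qed.

Lemma path5 r1 r3 r5 c2 c4 c6 :
  unc P r1 c2 -> unc P r3 c2 -> unc P r3 c4 -> unc P r5 c4 -> unc P r5 c6 ->
  r1 != r3 -> r1 != r5 -> r3 != r5 -> c2 != c4 -> c2 != c6 -> c4 != c6 -> False.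
Proof.
move=> u12 u32 u34 u54 u56 n13 n15 n35 n24 n26 n46.
have n31 : r3 != r1 by rewrite eq_sym.
have n51 : r5 != r1 by rewrite eq_sym.
have n53 : r5 != r3 by rewrite eq_sym.
have n42 : c4 != c2 by rewrite eq_sym.
have n62 : c6 != c2 by rewrite eq_sym.
have n64 : c6 != c4 by rewrite eq_sym.
apply: (@p5_main _ (fun x => x \in Rs L r1) (fun x => x \in Cs L c2) (fun x => x \in Rs L r3)
   (fun x => x \in Cs L c4) (fun x => x \in Rs L r5) (fun x => x \in Cs L c6)
   (L r1 c2) (L r3 c2) (L r3 c4) (L r5 c4) (L r5 c6) (L r1 c4) (L r1 c6) (L r3 c6) (L r5 c2));
  rewrite /= ?inRs ?inCs //; try (by apply: rne); try (by apply: cne).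
- by move=> x; case/orP: (Gl LP Luniq x u32); auto.
- by move=> x; case/orP: (Gl LP Luniq x u34); auto.
- by move=> x; case/orP: (Gl LP Luniq x u54); auto.
- by move=> x y h1 h2 h3 h4 h5 h6; exact: (Ul LP Luniq u12 h1 h2 h3 h4 h5 h6).
- by move=> x y h1 h2 h3 h4 h5 h6; exact: (Ul LP Luniq u32 h2 h1 h4 h3 h5 h6).
- by move=> x y h1 h2 h3 h4 h5 h6; exact: (Ul LP Luniq u34 h1 h2 h3 h4 h5 h6).
- by move=> x y h1 h2 h3 h4 h5 h6; exact: (Ul LP Luniq u54 h2 h1 h4 h3 h5 h6).
- by move=> x y h1 h2 h3 h4 h5 h6; exact: (Ul LP Luniq u56 h1 h2 h3 h4 h5 h6).
- by apply/orP; exact: (Sl_col LP Luniq u12 u32 n13).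
- by apply/orP; exact: (Sl LP Luniq u32 u34 n24).
- by apply/orP; exact: (Sl_col LP Luniq u34 u54 n35).
- by apply/orP; exact: (Sl LP Luniq u54 u56 n46).
Qed.

Lemma noconf i j j' i' i2 j2 : unc P i j -> unc P i j' -> unc P i' j -> unc P i2 j' ->
  unc P i' j2 -> j' != j -> i' != i -> i2 != i -> j2 != j -> False.
Proof.
move=> u w z w' z' njj nii ni2 nj2.
case: (eqVneq i2 i') => [e2|ne2].
  subst i2.
  case: (eqVneq j2 j') => [e3|ne3].
    subst j2; apply: (cyc4 u w z w'); by rewrite eq_sym.
  apply: (Tl LP Luniq z z' w'); by rewrite // eq_sym.
case: (eqVneq j2 j') => [e3|ne3].
  subst j2; apply: (Tl_col LP Luniq w w' z'); by rewrite // eq_sym.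
apply: (path5 w' w u z z'); by rewrite // eq_sym.
Qed.

End Conf.


Lemma card_le2_3 (T : finType) (A : {set T}) a b c : #|A| <= 2 ->
  a \in A -> b \in A -> c \in A -> a != b -> a != c -> b != c -> False.
Proof.
move=> cA aA bA cA' ab ac bc.
have sub : a |: [set b; c] \subset A.
  by apply/subsetP => z; rewrite !inE => /orP[|/orP[]] /eqP->.
have := subset_leq_card sub; rewrite cardsU1 cards2 !inE negb_or ab ac bc /=.
by move=> h; have := leq_trans h cA.
Qed.

Lemma card_ge3 (T : finType) (A : {set T}) : 2 < #|A| ->
  exists a b c, [/\ a \in A, b \in A, c \in A & [/\ a != b, a != c & b != c]].
Proof.
move=> h.
have /card_gt0P [a aA] : 0 < #|A| by apply: leq_trans h.
have h1 : 1 < #|A :\ a| by move: h; rewrite (cardsD1 a) aA.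
have /card_gt0P [b bA] : 0 < #|A :\ a| by apply: leq_trans h1.
have h2 : 0 < #|A :\ a :\ b| by move: h1; rewrite (cardsD1 b (A :\ a)) bA.
have /card_gt0P [c cA] := h2.
move: bA cA; rewrite !inE => /andP[ba bA] /andP[cb /andP[ca cA]].
by exists a, b, c; split; rewrite //; split; rewrite // eq_sym.
Qed.

Lemma sum_ind (T : finType) (U D : {set T}) : D \subset U ->
  \sum_(x in U) (x \in D : nat) = #|D|.
Proof.
move=> sub.
rewrite (eq_bigr (fun x => if x \in D then 1 else 0)); last by move=> x _; case: (x \in D).
rewrite -big_mkcondr /= sum1_card; apply: eq_card => x; rewrite unfold_in /=.
by case xD: (x \in D); rewrite ?andbF ?andbT // (subsetP sub).
Qed.

Section Count.
Variable n : nat.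
Local Notation K := (2 * n - 2).
Variables (P : partial_coloring n K) (L : full_square n K).
Hypothesis LP : extension_of P L.
Hypothesis Luniq : forall L', extension_of P L' -> forall i j, L' i j = L i j.

Definition U := [set x : 'I_n * 'I_n | unc P x.1 x.2].
Definition Rw i := [set x in U | x.1 == i].
Definition Cl j := [set x in U | x.2 == j].
Definition ur i := #|Rw i|.
Definition uc j := #|Cl j|.

Lemma pair_neq1 (x y : 'I_n * 'I_n) : x.1 = y.1 -> x != y -> x.2 != y.2.
Proof.
move=> e1; apply: contra => /eqP e2; apply/eqP.
by rewrite [x]surjective_pairing [y]surjective_pairing e1 e2.
Qed.

Lemma pair_neq2 (x y : 'I_n * 'I_n) : x.2 = y.2 -> x != y -> x.1 != y.1.
Proof.
move=> e2; apply: contra => /eqP e1; apply/eqP.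
by rewrite [x]surjective_pairing [y]surjective_pairing e1 e2.
Qed.

Lemma ur_le2 i : ur i <= 2.
Proof.
rewrite leqNgt; apply/negP => /card_ge3 [a [b [c [aR bR cR [ab ac bc]]]]].
move: aR bR cR; rewrite !inE => /andP[ua /eqP ai] /andP[ub /eqP bi] /andP[uc' /eqP ci].
apply: (Tl LP Luniq (i:=i) (j1:=a.2) (j2:=b.2) (j3:=c.2)).
- by rewrite -ai.
- by rewrite -bi.
- by rewrite -ci.
- by apply: pair_neq1; rewrite ?ai ?bi.
- by apply: pair_neq1; rewrite ?ai ?ci.
- by apply: pair_neq1; rewrite ?bi ?ci.
Qed.

Lemma uc_le2 j : uc j <= 2.
Proof.
rewrite leqNgt; apply/negP => /card_ge3 [a [b [c [aR bR cR [ab ac bc]]]]].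
move: aR bR cR; rewrite !inE => /andP[ua /eqP ai] /andP[ub /eqP bi] /andP[uc' /eqP ci].
apply: (Tl_col LP Luniq (j:=j) (i1:=a.1) (i2:=b.1) (i3:=c.1)).
- by rewrite -ai.
- by rewrite -bi.
- by rewrite -ci.
- by apply: pair_neq2; rewrite ?ai ?bi.
- by apply: pair_neq2; rewrite ?ai ?ci.
- by apply: pair_neq2; rewrite ?bi ?ci.
Qed.

Lemma ur_ge1 x : x \in U -> 0 < ur x.1.
Proof. by move=> xU; apply/card_gt0P; exists x; rewrite inE xU eqxx. Qed.
Lemma uc_ge1 x : x \in U -> 0 < uc x.2.
Proof. by move=> xU; apply/card_gt0P; exists x; rewrite inE xU eqxx. Qed.

Definition wR i := if ur i == 1 then 2 else 1.
Definition wC j := if uc j == 1 then 2 else 1.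

Lemma sumR : \sum_(x in U) wR x.1 <= 2 * n.
Proof.
rewrite (partition_big (fun x : 'I_n * 'I_n => x.1) predT) //=.
apply: leq_trans (_ : \sum_(i : 'I_n) 2 <= _); last by rewrite sum_nat_const card_ord mulnC.
apply: leq_sum => i _.
rewrite (eq_bigr (fun _ => wR i)); last by move=> x /andP[_ /eqP->].
rewrite sum_nat_const.
have -> : #|[pred x | (x \in U) && (x.1 == i)]| = ur i.
  by apply: eq_card => x; rewrite !inE.
have := ur_le2 i; rewrite /wR.
by case: (ur i) => [|[|[|]]].
Qed.

Lemma sumC : \sum_(x in U) wC x.2 <= 2 * n.
Proof.
rewrite (partition_big (fun x : 'I_n * 'I_n => x.2) predT) //=.
apply: leq_trans (_ : \sum_(i : 'I_n) 2 <= _); last by rewrite sum_nat_const card_ord mulnC.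
apply: leq_sum => i _.
rewrite (eq_bigr (fun _ => wC i)); last by move=> x /andP[_ /eqP->].
rewrite sum_nat_const.
have -> : #|[pred x | (x \in U) && (x.2 == i)]| = uc i.
  by apply: eq_card => x; rewrite !inE.
have := uc_le2 i; rewrite /wC.
by case: (uc i) => [|[|[|]]].
Qed.


Definition D22 := [set x in U | (ur x.1 != 1) && (uc x.2 != 1)].
Definition Dmx := [set x in U | (ur x.1 == 1) != (uc x.2 == 1)].

Definition rowmate x := odflt x [pick y in U | (y.1 == x.1) && (y != x)].
Definition colmate x := odflt x [pick y in U | (y.2 == x.2) && (y != x)].

Lemma inRw x i : (x \in Rw i) = (x \in U) && (x.1 == i). Proof. by rewrite inE. Qed.
Lemma inCl x j : (x \in Cl j) = (x \in U) && (x.2 == j). Proof. by rewrite inE. Qed.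
Lemma inD22 x : (x \in D22) = (x \in U) && ((ur x.1 != 1) && (uc x.2 != 1)). Proof. by rewrite inE. Qed.
Lemma inDmx x : (x \in Dmx) = (x \in U) && ((ur x.1 == 1) != (uc x.2 == 1)). Proof. by rewrite inE. Qed.

Lemma RM x : x \in U -> ur x.1 != 1 ->
  [/\ rowmate x \in U, (rowmate x).1 = x.1 & rowmate x != x].
Proof.
move=> xU n1; rewrite /rowmate; case: pickP => [y /andP[yU /andP[/eqP e ne]]|none] //=.
exfalso.
have : 1 < ur x.1 by have := ur_ge1 xU; case: (ur x.1) n1 => [|[|]].
rewrite /ur (cardsD1 x) inRw xU eqxx /= ltnS => /card_gt0P [y].
rewrite in_setD1 inRw => /andP[ne /andP[yU /eqP e]].
by have := none y; rewrite /= yU e eqxx ne.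
Qed.

Lemma CM x : x \in U -> uc x.2 != 1 ->
  [/\ colmate x \in U, (colmate x).2 = x.2 & colmate x != x].
Proof.
move=> xU n1; rewrite /colmate; case: pickP => [y /andP[yU /andP[/eqP e ne]]|none] //=.
exfalso.
have : 1 < uc x.2 by have := uc_ge1 xU; case: (uc x.2) n1 => [|[|]].
rewrite /uc (cardsD1 x) inCl xU eqxx /= ltnS => /card_gt0P [y].
rewrite in_setD1 inCl => /andP[ne /andP[yU /eqP e]].
by have := none y; rewrite /= yU e eqxx ne.
Qed.

Definition phi x := if uc (rowmate x).2 == 1 then rowmate x else colmate x.

Lemma uncU x : x \in U -> unc P x.1 x.2.
Proof. by rewrite inE. Qed.

Lemma phi_mx x : x \in D22 -> phi x \in Dmx.
Proof.
rewrite inD22 => /andP[xU /andP[nr nc]].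
have [yU y1 yx] := RM xU nr.
have [zU z2 zx] := CM xU nc.
rewrite /phi; case: ifP => hy.
  by rewrite inDmx yU y1 (negbTE nr) hy.
rewrite inDmx zU z2 (negbTE nc) /=.
case nz: (ur (colmate x).1 == 1) => //.
have nz' : ur (colmate x).1 != 1 by rewrite nz.
exfalso.
have [z'U z'1 z'z] := RM zU nz'.
have [w'U w'2 w'y] := CM yU (negbT hy).
apply: (@noconf _ _ _ LP Luniq x.1 x.2 (rowmate x).2 (colmate x).1
  (colmate (rowmate x)).1 (rowmate (colmate x)).2).
- exact: uncU.
- by rewrite -y1; exact: uncU.
- by rewrite -z2; exact: uncU.
- by rewrite -w'2; exact: uncU.
- by rewrite -z'1; exact: uncU.
- exact: pair_neq1.
- exact: pair_neq2.
- by rewrite -y1; apply: pair_neq2.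
- by rewrite -z2; apply: pair_neq1.
Qed.

Lemma phi_inj : {in D22 &, injective phi}.
Proof.
move=> x1 x2; rewrite !inD22 => /andP[x1U /andP[nr1 nc1]] /andP[x2U /andP[nr2 nc2]].
have [y1U y11 y1x] := RM x1U nr1.
have [z1U z12 z1x] := CM x1U nc1.
have [y2U y21 y2x] := RM x2U nr2.
have [z2U z22 z2x] := CM x2U nc2.
rewrite /phi; case: ifP => h1; case: ifP => h2 => e.
- apply/eqP; apply: contraT => ne; exfalso.
  apply: (@card_le2_3 _ (Rw x1.1) x1 x2 (rowmate x1)).
  + exact: ur_le2.
  + by rewrite ?inRw ?inCl x1U eqxx.
  + by rewrite inRw x2U -y21 -e y11 eqxx.
  + by rewrite inRw y1U y11 eqxx.
  + exact: ne.
  + by rewrite eq_sym.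
  + by rewrite e eq_sym.
- by move: h1; rewrite e z22 (negbTE nc2).
- by move: h2; rewrite -e z12 (negbTE nc1).
- apply/eqP; apply: contraT => ne; exfalso.
  apply: (@card_le2_3 _ (Cl x1.2) x1 x2 (colmate x1)).
  + exact: uc_le2.
  + by rewrite ?inRw ?inCl x1U eqxx.
  + by rewrite inCl x2U -z22 -e z12 eqxx.
  + by rewrite inCl z1U z12 eqxx.
  + exact: ne.
  + by rewrite eq_sym.
  + by rewrite e eq_sym.
Qed.

Lemma D22_le : #|D22| <= #|Dmx|.
Proof.
rewrite -(card_in_imset phi_inj); apply: subset_leq_card.
by apply/subsetP => y /imsetP[x xD ->]; exact: phi_mx.
Qed.

Lemma bound : 5 * #|U| <= 8 * n.
Proof.
have key : \sum_(x in U) (5 + (x \in Dmx)) <= \sum_(x in U) (2 * wR x.1 + 2 * wC x.2 + (x \in D22)).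
  apply: leq_sum => x xU.
  rewrite inDmx inD22 xU /= /wR /wC.
  have := ur_ge1 xU; have := ur_le2 x.1; have := uc_ge1 xU; have := uc_le2 x.2.
  by case: (ur x.1) => [|[|[|]]]; case: (uc x.2) => [|[|[|]]].
have DmxU : Dmx \subset U by apply/subsetP => x; rewrite inDmx => /andP[].
have D22U : D22 \subset U by apply/subsetP => x; rewrite inD22 => /andP[].
rewrite big_split /= sum_nat_const (sum_ind DmxU) in key.
rewrite big_split big_split /= (sum_ind D22U) -!big_distrr /= in key.
have e1 : 2 * \sum_(x in U) wR x.1 + 2 * \sum_(x in U) wC x.2 + #|D22| <= 2 * (2 * n) + 2 * (2 * n) + #|Dmx|.
  by rewrite leq_add // ?leq_add // ?leq_mul2l ?sumR ?sumC ?D22_le ?orbT.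
have := leq_trans key e1; rewrite leq_add2r.
have -> : 2 * (2 * n) + 2 * (2 * n) = 8 * n by lia.
by rewrite mulnC.
Qed.
End Count.

Theorem theorem1 (n : nat) (hn : 1 <= n)
    (P : partial_coloring n (2 * n - 2)) :
  uniquely_extends P -> 5 * num_uncolored P <= 8 * n.
Proof.
case=> L [LP Luniq].
exact: (bound LP Luniq).
Qed.
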